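(* Let $G$ be an $n$-vertex connected graph with chromatic number $\chi \geq 2$, and suppose that $\chi$ divides $n$. Then ${\rm ABC}(G) \leq {\rm ABC}(T_{n,\chi})$, with equality if and only if $G \cong T_{n,\chi}$.
   Context: All graphs are simple and undirected. For a graph $G$ and a vertex $v$, $d(v)$ denotes the degree of $v$. The atom-bond connectivity (ABC) index is ${\rm ABC}(G)=\sum_{uv\in E(G)} \sqrt{\frac{d(u)+d(v)-2}{d(u)d(v)}}$. $T_{n,l}$ denotes the complete $l$-partite graph on $n$ vertices whose part sizes $t_1,\dots,t_l$ satisfy $|t_i - t_j| \leq 1$ for all $i,j$. *)

(* Defs.v *)
From mathcomp Require Import all_boot all_order all_algebra.
From mathcomp Require Import reals.
Set Implicit Arguments. Unset Strict Implicit. Unset Printing Implicit Defensive.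
Import Order.TTheory GRing.Theory Num.Theory.

Definition simple_graph (V : finType) (e : rel V) : Prop :=
  symmetric e /\ irreflexive e.

Definition connected_graph (V : finType) (e : rel V) : Prop :=
  forall x y : V, connect e x y.

Definition deg (V : finType) (e : rel V) (v : V) : nat := #|[set w | e v w]|.

Definition colorable (V : finType) (e : rel V) (k : nat) : Prop :=
  exists f : V -> 'I_k, forall x y, e x y -> f x != f y.

Definition chromatic_number (V : finType) (e : rel V) (chi : nat) : Prop :=
  colorable e chi /\ forall k, colorable e k -> chi <= k.

Local Open Scope ring_scope.

(* ABC index: sum over unordered edges uv; each edge is counted twice in the
   double sum over ordered adjacent pairs, hence the factor 1/2. *)
Definition ABC (R : realType) (V : finType) (e : rel V) : R :=
  2^-1 * \sum_(x : V) \sum_(y : V | e x y)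
    Num.sqrt (((deg e x)%:R + (deg e y)%:R - 2) / ((deg e x)%:R * (deg e y)%:R)).

Local Close Scope ring_scope.

(* Turan graph T_{n,l}: vertices 0..n-1, vertex i in part (i mod l); complete
   l-partite, part sizes differ by at most one. *)
Definition turan (n l : nat) : rel 'I_n := fun i j => (i %% l != j %% l)%N.
Arguments turan n l : clear implicits.

Definition isomorphic (V W : finType) (e : rel V) (f : rel W) : Prop :=
  exists g : V -> W, bijective g /\ forall x y, f (g x) (g y) = e x y.

(* Main.v *)
Require Import Defs.
From mathcomp Require Import all_boot all_order all_algebra.
From mathcomp Require Import reals.
From mathcomp Require Import lra ring zify.
Import Order.TTheory GRing.Theory Num.Theory.
Set Implicit Arguments. Unset Strict Implicit. Unset Printing Implicit Defensive.

Lemma card_res (k chi r : nat) : 0 < chi -> r < chi ->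
  #|[set j : 'I_(chi * k) | j %% chi == r]| = k.
Proof.
move=> chi0 rlt.
have hlt : forall t : 'I_k, r + chi * t < chi * k.
  move=> [t tk] /=.
  have : chi * t.+1 <= chi * k by rewrite leq_mul2l tk orbT.
  rewrite mulnS; lia.
pose h (t : 'I_k) : 'I_(chi * k) := Ordinal (hlt t).
have hinj : injective h.
  move=> t t' /(congr1 val) /= /eqP; rewrite eqn_add2l eqn_mul2l.
  case/orP => [/eqP c0|/eqP tt]; first by move: chi0; rewrite c0.
  exact: val_inj.
have -> : [set j : 'I_(chi * k) | j %% chi == r] = h @: 'I_k.
  apply/setP => j; rewrite inE; apply/eqP/imsetP.
    move=> jr; have jk : j %/ chi < k by rewrite ltn_divLR // -[k * chi]mulnC.
    exists (Ordinal jk) => //; apply: val_inj => /=.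
    by rewrite {1}(divn_eq j chi) jr addnC mulnC.
  by move=> [t _ ->] /=; rewrite addnC mulnC modnMDl modn_small.
by rewrite card_imset // card_ord.
Qed.

Lemma turan_deg (k chi : nat) (i : 'I_(chi * k)) : 0 < chi ->
  deg (turan (chi * k) chi) i = chi * k - k.
Proof.
move=> chi0.
have := cardsC [set j : 'I_(chi * k) | j %% chi == i %% chi].
rewrite card_res ?ltn_pmod // card_ord.
have -> : ~: [set j : 'I_(chi * k) | j %% chi == i %% chi] = [set j | turan (chi * k) chi i j].
  by apply/setP => j; rewrite !inE /turan eq_sym.
rewrite /deg; lia.
Qed.

Local Open Scope ring_scope.

Lemma cs_sum (R : realType) (I : finType) (P : pred I) (F : I -> R) :
  (\sum_(i | P i) F i)^+2 <= (\sum_(i | P i) 1) * \sum_(i | P i) F i ^+ 2.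
Proof.
set N := \sum_(i | P i) (1:R); set A := \sum_(i | P i) F i; set B := \sum_(i | P i) F i ^+ 2.
have Nc : forall c : R, \sum_(i | P i) c = N * c.
  by move=> c; rewrite /N mulr_suml; apply: eq_bigr => *; rewrite mul1r.
have H : 0 <= \sum_(i | P i) \sum_(j | P j) (F i - F j)^+2.
  by apply: sumr_ge0 => i _; apply: sumr_ge0 => j _; exact: sqr_ge0.
have E : \sum_(i | P i) \sum_(j | P j) (F i - F j)^+2
   = \sum_(i | P i) (N * F i ^+ 2 + B - 2 * A * F i).
  apply: eq_bigr => i _.
  under eq_bigr => j _ do rewrite sqrrB.
  rewrite big_split /= sumrB big_split /= Nc -mulr_sumr -/A -/B; ring.
have E2 : \sum_(i | P i) (N * F i ^+ 2 + B - 2 * A * F i) = 2 * (N * B - A ^+ 2).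
  rewrite sumrB big_split /= Nc -mulr_sumr -mulr_sumr -/A -/B; ring.
rewrite E E2 in H; lra.
Qed.

Lemma sum_constr (R : realType) (I : finType) (P : pred I) (c : R) :
  \sum_(i | P i) c = (\sum_(i | P i) 1) * c.
Proof. by rewrite mulr_suml; apply: eq_bigr => *; rewrite mul1r. Qed.

Lemma ltr_sum_one (R : realType) (I : finType) (P : pred I) (F G : I -> R) (j : I) :
  (forall i, P i -> F i <= G i) -> P j -> F j < G j ->
  \sum_(i | P i) F i < \sum_(i | P i) G i.
Proof.
move=> H Pj Hj; rewrite (bigD1 j) // [X in _ < X](bigD1 j) //=.
by apply: ltr_leD => //; apply: ler_sum => i /andP[Pi _]; exact: H.
Qed.

Section G.
Variables (R : realType) (V : finType) (e : rel V).
Let dg (x : V) : R := (deg e x)%:R.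
Let X (x y : V) : R := (dg x + dg y - 2) / (dg x * dg y).

Lemma deg_sum x : \sum_(y | e x y) (1:R) = dg x.
Proof. by rewrite /dg /deg -sum1dep_card natr_sum. Qed.

Lemma abc_cs : (forall x y, e x y -> 0 <= X x y) ->
  (2 * ABC R e)^+2 <= (\sum_x dg x) * \sum_x \sum_(y | e x y) X x y.
Proof.
move=> Xge0.
have -> : 2 * ABC R e = \sum_x \sum_(y | e x y) Num.sqrt (X x y).
  by rewrite /ABC mulrA divff ?mul1r // pnatr_eq0.
have -> : \sum_x dg x = \sum_x \sum_(y | e x y) (1:R).
  by apply: eq_bigr => x _; rewrite deg_sum.
have -> : \sum_x \sum_(y | e x y) X x y = \sum_x \sum_(y | e x y) (Num.sqrt (X x y))^+2.
  by apply: eq_bigr => x _; apply: eq_bigr => y exy; rewrite sqr_sqrtr // Xge0.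
rewrite !pair_big_dep /=.
exact: cs_sum.
Qed.

Lemma swap_sum (G : V -> V -> R) : symmetric e ->
  \sum_x \sum_(y | e x y) G x y = \sum_x \sum_(y | e x y) G y x.
Proof.
move=> se.
under eq_bigr => x _ do rewrite big_mkcond.
rewrite exchange_big /=; apply: eq_bigr => y _; rewrite [RHS]big_mkcond /=.
by apply: eq_bigr => x _; rewrite se.
Qed.

Definition Ssum : R := \sum_x \sum_(y | e x y) (dg x * dg y)^-1.

Lemma B_eq : symmetric e -> (forall x, (0 < deg e x)%N) ->
  \sum_x \sum_(y | e x y) X x y = 2 * #|V|%:R - 2 * Ssum.
Proof.
move=> se dpos.
have dn0 : forall x, dg x != 0 by move=> x; rewrite /dg pnatr_eq0 -lt0n dpos.
have -> : \sum_x \sum_(y | e x y) X x y =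
   \sum_x \sum_(y | e x y) ((dg x)^-1 + (dg y)^-1 - 2 * (dg x * dg y)^-1).
  apply: eq_bigr => x _; apply: eq_bigr => y _; rewrite /X.
  have := dn0 x; have := dn0 y; move=> h1 h2; field; by rewrite h1 h2.
under eq_bigr => x _ do rewrite sumrB big_split /= -mulr_sumr.
rewrite sumrB big_split /= -mulr_sumr /Ssum.
have H1 : \sum_x \sum_(y | e x y) (dg x)^-1 = #|V|%:R.
  rewrite -sum1_card natr_sum; apply: eq_bigr => x _.
  by rewrite sum_constr deg_sum divff ?dn0.
rewrite -(swap_sum (fun x y => (dg x)^-1)) // H1; ring.
Qed.

Lemma nbr_ex x : (0 < deg e x)%N -> exists y, e x y.
Proof. by move/card_gt0P => [y]; rewrite inE => ?; exists y. Qed.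

Lemma S_ge (D : nat) : (0 < D)%N -> (forall x, (0 < deg e x)%N) -> (forall x, (deg e x <= D)%N) ->
  (#|V|%:R / D%:R <= Ssum) /\ (symmetric e -> (exists y, (deg e y < D)%N) -> #|V|%:R / D%:R < Ssum).
Proof.
move=> Dp dpos dle.
have dgp : forall x, 0 < dg x by move=> x; rewrite /dg ltr0n.
have DpR : (0:R) < D%:R by rewrite ltr0n.
have mid : \sum_x \sum_(y | e x y) (dg x * D%:R)^-1 = #|V|%:R / D%:R.
  rewrite -sum1_card natr_sum mulr_suml; apply: eq_bigr => x _.
  rewrite sum_constr deg_sum invfM mulrA divff ?mul1r //; exact: lt0r_neq0.
have term : forall x y, e x y -> (dg x * D%:R)^-1 <= (dg x * dg y)^-1.
  move=> x y _; rewrite lef_pV2 ?posrE ?mulr_gt0 //.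
  by rewrite ler_pM2l // ler_nat.
split.
  rewrite -mid; apply: ler_sum => x _; apply: ler_sum => y; exact: term.
move=> se [y0 hy0].
have [x0 ex0] := nbr_ex (dpos y0).
have ex0' : e x0 y0 by rewrite se.
rewrite -mid; apply: (ltr_sum_one (j := x0)) => //.
  by move=> x _; apply: ler_sum => y; exact: term.
apply: (ltr_sum_one (j := y0)) => //=.
  exact: term.
rewrite ltf_pV2 ?posrE ?mulr_gt0 //.
by rewrite ltr_pM2l // ltr_nat.
Qed.
End G.



Lemma key_arith (R : realFieldType) (c k a D N Q : R) :
  2 <= c -> 1 <= k -> 1 <= a -> 1 <= D -> a + D <= c * k ->
  N + Q <= (c * k)^+2 -> (c * k - a)^+2 <= (c - 1) * (Q - a^+2) ->
  (D <= c * k - k \/ c * k - k + 1 <= D) ->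
  N * (D - 1) <= c * k * D * (c * k - k - 1) /\ N <= c * k * (c * k - k).
Proof.
move=> c2 k1 a1 D1 aD NQ CS hD.
have hQ : c * k ^+ 2 <= Q.
  have h : (c - 1) * (c * Q - (c * k) ^+ 2) >= 0.
    have : c * (((c * k) - a)^+2) <= c * ((c - 1) * (Q - a^+2)) by rewrite ler_pM2l //; lra.
    have := sqr_ge0 (c * a - (c * k)).  nra.
  have : c * Q - (c * k)^+2 >= 0.
    by rewrite -(pmulr_rge0 _ (_ : 0 < c - 1)) //; lra.
   nra.
have hN : N <= (c * k) * ((c * k) - k) by  nra.
split => //.
case: hD => hD.
  have : (c * k) * ((c * k) - k) * (D - 1) <= (c * k) * D * ((c * k) - k - 1) by  nra.
  have : N * (D - 1) <= (c * k) * ((c * k) - k) * (D - 1) by rewrite ler_wpM2r //; lra.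
  lra.
have hb : (c - 1) * ((c * k) - D) ^+ 2 + ((c * k) - ((c * k) - D)) ^+2 <= (c - 1) * Q.
  have : (c - 1) * ((c * k) - D) ^+ 2 + ((c * k) - ((c * k) - D)) ^+2 <= (c - 1) * a ^+ 2 + ((c * k) - a) ^+2.
    have e1 : (c - 1) * a ^+ 2 + ((c * k) - a) ^+2 - ((c - 1) * ((c * k) - D) ^+ 2 + ((c * k) - ((c * k) - D)) ^+2)
       = (((c * k) - D) - a) * (2 * (c * k) - c * (a + ((c * k) - D))) by  ring.
    have : 0 <= (((c * k) - D) - a) * (2 * (c * k) - c * (a + ((c * k) - D))).
      apply: mulr_ge0; first lra.
      have : 0 <= c * (2 * k - (a + (c * k - D))) by apply: mulr_ge0; lra.
      lra.
    lra.
  nra.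
have hN2 : (c - 1) * N <= c * D * (2 * (c - 1) * k - D).
  have : (c - 1) * N <= (c - 1) * ((c * k)^+2 - Q) by rewrite ler_pM2l; lra.
  have e2 : (c - 1) * (c * k) ^+ 2 - ((c - 1) * ((c * k) - D) ^+ 2 + ((c * k) - ((c * k) - D)) ^+2)
     = c * D * (2 * (c - 1) * k - D) by ring.
  lra.
have h3 : (2 * (c - 1) * k - D) * (D - 1) <= (c - 1) * k * ((c - 1) * k - 1).
  have : 0 <= (D - (c - 1) * k) * (D - (c - 1) * k - 1) by apply: mulr_ge0;  lra.
  nra.
have : (c - 1) * (N * (D - 1)) <= (c - 1) * ((c * k) * D * ((c * k) - k - 1)).
  have : (c - 1) * N * (D - 1) <= c * D * (2 * (c - 1) * k - D) * (D - 1).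
    by rewrite ler_wpM2r //; lra.
  have : c * D * (2 * (c - 1) * k - D) * (D - 1) <= c * D * ((c - 1) * k * ((c - 1) * k - 1)).
    rewrite -mulrA ler_wpM2l //; nra.
   nra.
rewrite ler_pM2l //; lra.
Qed.





Section C.
Variables (R : realType) (V : finType) (e : rel V) (chi : nat) (c : V -> 'I_chi).
Hypothesis proper : forall x y, e x y -> c x != c y.
Let ns (i : 'I_chi) := #|[set w | c w == i]|.

Lemma deg_class x : (deg e x + ns (c x) <= #|V|)%N.
Proof.
have sub : [set w | e x w] \subset ~: [set w | c w == c x].
  apply/subsetP => w; rewrite !inE => exw; rewrite eq_sym; exact: proper.
have := subset_leq_card sub.
have := cardsC [set w | c w == c x].
rewrite /deg /ns; lia.
Qed.

Lemma sum_class (F : 'I_chi -> R) : \sum_x F (c x) = \sum_i (ns i)%:R * F i.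
Proof.
rewrite (partition_big c xpredT) //=; apply: eq_bigr => i _.
rewrite (eq_bigr (fun _ => F i)); last by move=> x /eqP ->.
by rewrite sumr_const /ns cardsE mulr_natl.
Qed.

Lemma sum_ns : \sum_i ((ns i)%:R : R) = #|V|%:R.
Proof.
transitivity (\sum_i (ns i)%:R * (1:R)).
  by apply: eq_bigr => i _; rewrite mulr1.
by rewrite -(sum_class (fun _ => 1)) sumr_const.
Qed.

Lemma sumdeg_bound :
  \sum_x ((deg e x)%:R : R) + \sum_i ((ns i)%:R)^+2 <= (#|V|%:R)^+2.
Proof.
have -> : \sum_i ((ns i)%:R : R)^+2 = \sum_x (ns (c x))%:R.
  by rewrite (sum_class (fun i => (ns i)%:R)); apply: eq_bigr => i _; rewrite expr2.
have -> : ((#|V|%:R : R))^+2 = \sum_(x : V) (#|V|%:R : R) by rewrite sumr_const expr2 mulr_natr.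
rewrite -big_split /=.
apply: ler_sum => x _; rewrite -natrD ler_nat; exact: deg_class.
Qed.

Lemma cs_class (i0 : 'I_chi) :
  ((#|V|%:R - (ns i0)%:R) : R)^+2 <=
    (chi%:R - 1) * (\sum_i ((ns i)%:R)^+2 - ((ns i0)%:R)^+2).
Proof.
have h := cs_sum (fun i : 'I_chi => i != i0) (fun i => ((ns i)%:R : R)).
have e1 : \sum_(i | i != i0) (1:R) = chi%:R - 1.
  have : \sum_(i : 'I_chi) (1:R) = chi%:R by rewrite sumr_const card_ord.
  rewrite (bigD1 i0) //= => <-; ring.
have e2 : \sum_(i | i != i0) ((ns i)%:R : R) = #|V|%:R - (ns i0)%:R.
  rewrite -sum_ns [X in _ = X - _](bigD1 i0) //=; ring.
have e3 : \sum_(i | i != i0) ((ns i)%:R : R)^+2 = \sum_i ((ns i)%:R)^+2 - ((ns i0)%:R)^+2.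
  rewrite [X in _ = X - _](bigD1 i0) //=; ring.
by rewrite e1 e2 e3 in h.
Qed.
End C.
Lemma abc_reg (R : realType) (V : finType) (e : rel V) (D : nat) : (forall x, deg e x = D) ->
  ABC R e = 2^-1 * (#|V| * D)%:R * Num.sqrt ((D%:R + D%:R - 2) / (D%:R * D%:R)).
Proof.
move=> hD; rewrite /ABC -mulrA; congr (_ * _).
under eq_bigr => x _ do (under eq_bigr => y _ do rewrite !hD).
under eq_bigr => x _ do rewrite sum_constr deg_sum hD.
by rewrite sum_constr sumr_const mulrA natrM.
Qed.

Lemma iso_deg (V W : finType) (e : rel V) (f : rel W) (g : V -> W) :
  bijective g -> (forall x y, f (g x) (g y) = e x y) -> forall x, deg f (g x) = deg e x.
Proof.
move=> bij iso x; have [g' gK g'K] := bij.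
rewrite /deg -(card_imset _ (bij_inj bij)); apply: eq_card => w'.
rewrite inE; apply/idP/imsetP.
  move=> h; exists (g' w'); last by rewrite g'K.
  by rewrite inE -iso g'K.
by move=> [w hw ->]; rewrite iso; move: hw; rewrite inE.
Qed.

Lemma fin_arith (R : realFieldType) (N S n D m : R) :
  0 <= N -> 0 < D -> 0 <= n -> n / D <= S -> N * (D - 1) <= n * D * m ->
  N * (2 * n - 2 * S) <= 2 * n * n * m /\ (0 < N -> n / D < S -> N * (2 * n - 2 * S) < 2 * n * n * m).
Proof.
move=> N0 D0 n0 hS hN.
have e1 : N * (2 * n - 2 * (n / D)) = 2 * n * (N * (D - 1)) / D by field; rewrite lt0r_neq0.
have h2 : 2 * n * (N * (D - 1)) / D <= 2 * n * n * m.
  have -> : 2 * n * n * m = 2 * n * (n * D * m) / D by field; rewrite lt0r_neq0.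
  rewrite ler_pM2r ?invr_gt0 //; apply: ler_wpM2l => //; lra.
split.
  have : N * (2 * n - 2 * S) <= N * (2 * n - 2 * (n / D)) by apply: ler_wpM2l => //; lra.
  lra.
move=> Np hS'.
have : N * (2 * n - 2 * S) < N * (2 * n - 2 * (n / D)) by rewrite ltr_pM2l //; lra.
lra.
Qed.

Lemma reg_sq (R : realType) (m D : nat) : (0 < D)%N ->
  (2 * (2^-1 * (m * D)%:R * Num.sqrt ((D%:R + D%:R - 2) / (D%:R * D%:R))) : R)^+2
  = (m%:R)^+2 * (2 * D%:R - 2).
Proof.
move=> D0.
have DR : (1 : R) <= D%:R by rewrite ler1n.
rewrite !mulrA divff ?mul1r ?pnatr_eq0 // exprMn sqr_sqrtr; last first.
  apply: divr_ge0; first lra. by apply: mulr_ge0; lra.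
rewrite natrM; field; lra.
Qed.

Lemma abc_ge0 (R : realType) (V : finType) (e : rel V) : 0 <= ABC R e.
Proof.
apply: mulr_ge0; first by rewrite invr_ge0 ler0n.
by apply: sumr_ge0 => x _; apply: sumr_ge0 => y _; exact: sqrtr_ge0.
Qed.


Theorem theorem5 (R : realType) (V : finType) (e : rel V) (n chi : nat) :
  simple_graph e -> #|V| = n -> connected_graph e ->
  chromatic_number e chi -> (2 <= chi)%N -> (chi %| n)%N ->
  ((ABC R e <= ABC R (turan n chi))%R /\
   (ABC R e = ABC R (turan n chi) <-> isomorphic e (turan n chi))).
Proof.
move=> [se ir] hn conn [[c proper] cmin] chi2 hdiv.
case/dvdnP: hdiv => k hk; rewrite mulnC in hk; rewrite hk in hn *; clear hk n.
have [x0 [y0 exy]] : exists x y, e x y.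
  case: (pickP (fun p : V * V => e p.1 p.2)) => [[x y] h|none]; first by exists x, y.
  have : colorable e 1.
    by exists (fun _ => ord0) => x y h; move: (none (x, y)); rewrite /= h.
  move/cmin; lia.
have dpos : forall z, (0 < deg e z)%N.
  move=> z; rewrite lt0n; apply/negP => /eqP d0.
  have noe : forall w, ~~ e z w.
    move=> w; apply/negP => h; move: d0; rewrite /deg; apply/eqP; rewrite -lt0n.
    by apply/card_gt0P; exists w; rewrite inE.
  have iso_pt : forall w, connect e z w -> w = z.
    move=> w /connectP [p pth ->]; case: p pth => [|w' p] //= /andP [h _].
    by move: (noe w'); rewrite h.
  have h1 := iso_pt _ (conn z x0); have h2 := iso_pt _ (conn z y0).
  by move: exy; rewrite h1 h2 ir.
have k1 : (0 < k)%N.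
  have : (0 < #|V|)%N by apply/card_gt0P; exists x0.
  rewrite hn; lia.
have chi0 : (0 < chi)%N by lia.
have d1 : (0 < chi * k - k)%N by nia.
have ABCT : ABC R (turan (chi * k) chi) = 2^-1 * ((chi * k) * (chi * k - k))%:R *
   Num.sqrt (((chi * k - k)%:R + (chi * k - k)%:R - 2) / ((chi * k - k)%:R * (chi * k - k)%:R)).
  by rewrite (abc_reg R (fun i => turan_deg i chi0)) card_ord.
set T2 : R := ((chi * k)%:R)^+2 * (2 * (chi * k - k)%:R - 2).
have sqT : (2 * ABC R (turan (chi * k) chi))^+2 = T2 by rewrite ABCT reg_sq.
have [u _ umax] := @arg_maxnP V x0 xpredT (deg e) isT.
have dle : forall x, (deg e x <= deg e u)%N by move=> x; exact: umax.
have bound : (2 * ABC R e)^+2 <= T2 /\ ((exists y, (deg e y < deg e u)%N) -> (2 * ABC R e)^+2 < T2).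
  have Dp := dpos u.
  set N := \sum_x ((deg e x)%:R : R).
  set Q := \sum_i ((#|[set w | c w == i]|)%:R : R)^+2.
  have a1 : (0 < #|[set w | c w == c u]|)%N by apply/card_gt0P; exists u; rewrite inE.
  have Hsd := sumdeg_bound R proper; rewrite hn -/N -/Q /= in Hsd.
  have Hcs := cs_class R c (c u); rewrite hn -/Q /= in Hcs.
  have Hdc := deg_class proper u; rewrite hn /= in Hdc.
  have hkle : (k <= chi * k)%N by rewrite leq_pmull.
  have hdR : ((chi * k - k)%:R : R) = chi%:R * k%:R - k%:R by rewrite natrB // natrM.
  have key := key_arith (c := chi%:R) (k := k%:R) (a := (#|[set w | c w == c u]|)%:R)
     (D := (deg e u)%:R) (N := N) (Q := Q).
  have [keyA _] : N * ((deg e u)%:R - 1) <= chi%:R * k%:R * (deg e u)%:R * (chi%:R * k%:R - k%:R - 1)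
      /\ N <= chi%:R * k%:R * (chi%:R * k%:R - k%:R).
    apply: key.
    - by rewrite ler_nat.
    - by rewrite ler1n.
    - by rewrite ler1n.
    - by rewrite ler1n.
    - by rewrite -natrM -natrD ler_nat addnC.
    - by rewrite -natrM.
    - by rewrite -natrM.
    - rewrite -hdR; case: (leqP (deg e u) (chi * k - k)) => h; [left|right].
        by rewrite ler_nat.
      by rewrite -[1]/(1%:R) -natrD ler_nat addn1.
  have Xge0 : forall x y, e x y -> 0 <= ((deg e x)%:R + (deg e y)%:R - 2) / ((deg e x)%:R * (deg e y)%:R :> R).
    move=> x y _.
    have hx : (1:R) <= (deg e x)%:R by rewrite ler1n.
    have hy : (1:R) <= (deg e y)%:R by rewrite ler1n.
    apply: divr_ge0; first lra. apply: mulr_ge0; lra.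
  have hcs := abc_cs Xge0; rewrite B_eq // -/N in hcs.
  rewrite hn natrM in hcs.
  have [Sge Sgt] := S_ge R Dp dpos dle; rewrite hn natrM in Sge Sgt.
  have N0 : 0 <= N by apply: sumr_ge0 => x _; exact: ler0n.
  have D0 : (0:R) < (deg e u)%:R by rewrite ltr0n.
  have n0 : (0:R) <= chi%:R * k%:R by rewrite -natrM ler0n.
  have [fa fb] := fin_arith N0 D0 n0 Sge keyA.
  have T2e : T2 = 2 * (chi%:R * k%:R) * (chi%:R * k%:R) * (chi%:R * k%:R - k%:R - 1).
    by rewrite /T2 natrM hdR; ring.
  split; first by rewrite T2e; lra.
  move=> ex.
  have N0' : 0 < N.
    rewrite /N (bigD1 x0) //=.
    have h1 : (0:R) < (deg e x0)%:R by rewrite ltr0n.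
    have h2 : (0:R) <= \sum_(i | i != x0) ((deg e i)%:R : R) by apply: sumr_ge0 => *; exact: ler0n.
    lra.
  have := fb N0' (Sgt se ex); rewrite T2e; lra.
have hkle : (k <= chi * k)%N by rewrite leq_pmull.
have ineq : ABC R e <= ABC R (turan (chi * k) chi).
  have h := proj1 bound; rewrite -sqT in h.
  have h2 : 2 * ABC R e <= 2 * ABC R (turan (chi * k) chi).
    by rewrite -ler_sqr // nnegrE mulr_ge0 ?abc_ge0.
  by rewrite ler_pM2l in h2.
split => //; split.
  move=> eqA.
  have eq2 : (2 * ABC R e)^+2 = T2 by rewrite eqA.
  have reg : forall x, deg e x = deg e u.
    move=> x; apply/eqP; rewrite eqn_leq dle /= leqNgt; apply/negP => hx.
    by have := (proj2 bound) (ex_intro _ x hx); rewrite eq2 ltxx.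
  have eqG := abc_reg R reg.
  have sqG : (2 * ABC R e)^+2 = (#|V|%:R)^+2 * (2 * (deg e u)%:R - 2) by rewrite eqG reg_sq.
  have Dd : deg e u = (chi * k - k)%N.
    rewrite sqG /T2 hn in eq2.
    have n0 : ((chi * k)%:R : R)^+2 != 0 by rewrite sqrf_eq0 pnatr_eq0 -lt0n muln_gt0 chi0.
    have := mulfI n0 eq2 => h.
    by apply/eqP; rewrite -(eqr_nat R); apply/eqP; lra.
  have degd : forall x, deg e x = (chi * k - k)%N by move=> x; rewrite reg Dd.
  have nsle : forall i, (#|[set w | c w == i]| <= k)%N.
    move=> i; case: (pickP (fun x => c x == i)) => [x /eqP cx | none].
      have := deg_class proper x; rewrite degd hn cx /=; lia.
    rewrite (_ : [set w | c w == i] = set0) ?cards0 //.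
    by apply/setP => w; rewrite !inE none.
  have sn : (\sum_i #|[set w | c w == i]| = chi * k)%N.
    by apply/eqP; rewrite -(eqr_nat R) natr_sum (sum_ns R c) hn.
  have nseq : forall i, #|[set w | c w == i]| = k.
    move=> i0.
    have s1 : (\sum_(i : 'I_chi) k = chi * k)%N by rewrite sum_nat_const card_ord.
    rewrite (bigD1 i0) //= in sn; rewrite (bigD1 i0) //= in s1.
    have : (\sum_(i < chi | i != i0) #|[set w | c w == i]| <= \sum_(i < chi | i != i0) k)%N.
      by apply: leq_sum => i _; exact: nsle.
    move=> hA; apply/eqP; rewrite eqn_leq nsle /=.
    by rewrite -(leq_add2r (\sum_(i < chi | i != i0) #|[set w | c w == i]|)) sn -s1 leq_add2l.
  have nbr : forall x y, e x y = (c x != c y).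
    move=> x y.
    have sub : [set w | e x w] \subset ~: [set w | c w == c x].
      apply/subsetP => w; rewrite !inE => exw; rewrite eq_sym; exact: proper.
    have cardeq : #|[set w | e x w]| = #|~: [set w | c w == c x]|.
      have := cardsC [set w | c w == c x]; rewrite nseq hn.
      have := degd x; rewrite /deg; lia.
    move/(subset_cardP cardeq): sub => seteq.
    have := seteq y; rewrite !inE => ->.
    by rewrite eq_sym.
  pose r x := index x (enum [set w | c w == c x]).
  have rlt : forall x, (r x < k)%N.
    move=> x; rewrite /r -(nseq (c x)) cardE index_mem mem_enum inE.
    by [].
  have glt : forall x, (c x + chi * r x < chi * k)%N.
    move=> x; have := ltn_ord (c x); have := rlt x; nia.
  pose g x : 'I_(chi * k) := Ordinal (glt x).
  have gmod : forall x, (g x %% chi = c x)%N.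
    by move=> x; rewrite /= addnC mulnC modnMDl modn_small.
  have gdiv : forall x, (g x %/ chi = r x)%N.
    by move=> x; rewrite /= addnC mulnC divnMDl // divn_small // addn0.
  have ginj : injective g.
    move=> x y gxy.
    have cxy : c x = c y by apply: val_inj => /=; rewrite -(gmod x) -(gmod y) gxy.
    have rxy : r x = r y by rewrite -gdiv -gdiv gxy.
    move: rxy; rewrite /r cxy => rxy.
    have mx : x \in enum [set w | c w == c y] by rewrite mem_enum inE cxy.
    have my : y \in enum [set w | c w == c y] by rewrite mem_enum inE.
    by rewrite -(nth_index x mx) rxy (nth_index x my).
  exists g; split.
    by apply: inj_card_bij => //; rewrite card_ord hn.
  by move=> x y; rewrite /turan !gmod nbr.
move=> [g [bij iso]].
have degs : forall x, deg e x = (chi * k - k)%N.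
  by move=> x; rewrite -(iso_deg bij iso) turan_deg.
by rewrite (abc_reg R degs) ABCT hn.
Qed.
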